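(* Let $G$ be a finite abstract simplicial complex with connection matrix $L$. Then $\det(L)=\phi(G)$, where $\phi(G)=\prod_{x\in G}\omega(x)\in\{-1,1\}$.
   Context: A finite abstract simplicial complex $G$ is a finite set of non-empty finite sets closed under taking non-empty subsets; its elements are called simplices. For $x\in G$ let $\dim(x)=|x|-1$ and $\omega(x)=(-1)^{\dim(x)}$. The connection matrix $L$ of $G$ is the $|G|\times|G|$ matrix indexed by the simplices of $G$ with $L(x,y)=1$ if $x\cap y\neq\emptyset$ and $L(x,y)=0$ otherwise. The number $\phi(G)=\prod_{x\in G}\omega(x)$ is called the Fermi characteristic. *)

(* Defs.v *)
From mathcomp Require Import all_boot all_order all_algebra.
Set Implicit Arguments. Unset Strict Implicit. Unset Printing Implicit Defensive.
Import GRing.Theory Num.Theory.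
Local Open Scope ring_scope.

Definition simplicial_complex (V : finType) (G : {set {set V}}) : Prop :=
  (forall x, x \in G -> x != set0) /\
  (forall x y : {set V}, x \in G -> y \subset x -> y != set0 -> y \in G).

Definition sdim (V : finType) (x : {set V}) : nat := (#|x| - 1)%N.

Definition omega (V : finType) (x : {set V}) : int := (-1) ^+ sdim x.

Definition fermi (V : finType) (G : {set {set V}}) : int :=
  \prod_(x in G) omega x.

Definition connection_matrix (V : finType) (G : {set {set V}})
  : 'M[int]_(#|G|) :=
  \matrix_(i < #|G|, j < #|G|)
     (if (enum_val i :&: enum_val j) != set0 then 1 else 0).

(* Main.v *)
Require Import Defs.
From mathcomp Require Import all_boot all_order all_algebra.
From mathcomp Require Import fingroup perm zify ring lra.
Set Implicit Arguments. Unset Strict Implicit. Unset Printing Implicit Defensive.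
Import GRing.Theory Num.Theory.
Local Open Scope ring_scope.

Lemma alt_sum (V : finType) (S : {set V}) :
  \sum_(z : {set V} | z \subset S) (-1) ^+ #|z| = (S == set0)%:R :> int.
Proof.
have [->|/set0Pn [a aS]] := eqVneq S set0.
  rewrite (eq_bigl (fun z => z == set0)); last by move=> z; rewrite subset0.
  by rewrite big_pred1_eq cards0 expr0.
set h := fun z : {set V} => if a \in z then z :\ a else a |: z.
have hK : involutive h.
  move=> z; rewrite /h; case: (boolP (a \in z)) => az.
    by rewrite !inE eqxx /= setD1K.
  by rewrite setU11 setU1K.
have hS z : (h z \subset S) = (z \subset S).
  rewrite /h; case: (boolP (a \in z)) => az.
    apply/idP/idP => H; last by apply: subset_trans H; apply: subD1set.
    by rewrite -(setD1K az) subUset sub1set aS H.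
  by rewrite subUset sub1set aS.
have hc z : (-1) ^+ #|h z| = - (-1) ^+ #|z| :> int.
  rewrite /h; case: (boolP (a \in z)) => az /=.
    by rewrite (cardsD1 a z) az add1n exprS mulN1r opprK.
  by rewrite (cardsD1 a (a |: z)) setU11 setU1K // add1n exprS mulN1r.
have E : \sum_(z : {set V} | z \subset S) (-1) ^+ #|z| =
    \sum_(z : {set V} | h z \subset S) (-1) ^+ #|h z| :> int :=
  reindex_inj (can_inj hK).
rewrite (eq_bigl _ _ hS) (eq_bigr _ (fun z _ => hc z)) sumrN in E.
move: E; set s := \sum_(_ | _) _ => E /=.
lia.
Qed.
Definition Bmx (V : finType) (G : {set {set V}}) : 'M[int]_(#|G|) :=
  \matrix_(i < #|G|, j < #|G|) (if enum_val j \subset enum_val i then 1 else 0).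

Lemma det_Bmx (V : finType) (G : {set {set V}}) : \det (Bmx G) = 1.
Proof.
rewrite /determinant (bigD1 (1%g : {perm 'I_#|G|})) //= odd_perm1 expr0 mul1r.
rewrite big1; last by move=> i _; rewrite mxE perm1 subxx.
rewrite big1 ?addr0 // => s sn1.
case: (boolP [forall i, enum_val (s i) \subset enum_val i]) => H; last first.
  move/forallPn: H => [i Hi].
  by rewrite (bigD1 i) //= mxE (negbTE Hi) mul0r mulr0.
exfalso; move/eqP: sn1; apply; apply/permP => i; rewrite perm1.
have Hle : forall i, true -> (#|enum_val (s i)| <= #|enum_val i| ?= iff
             (#|enum_val (s i)| == #|enum_val i|))%N.
  move=> j _; split; last by [].
  by apply: subset_leq_card; move/forallP: H; apply.
have := leqif_sum Hle.
have Esum : (\sum_(i < #|G|) #|enum_val (s i)| = \sum_(i < #|G|) #|enum_val i|)%N.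
  by rewrite [RHS](reindex_inj (@perm_inj _ s)).
case=> _; rewrite Esum eqxx => /esym /forallP /(_ i) /= Hc.
apply: enum_val_inj; apply/eqP; rewrite eqEcard.
move/forallP: H => /(_ i) -> /=.
by rewrite (eqP Hc).
Qed.

Lemma mulmx_diag_r n (A : 'M[int]_n) (d : 'rV[int]_n) :
  A *m diag_mx d = \matrix_(i, j) (A i j * d 0 j).
Proof.
apply/matrixP=> i j; rewrite !mxE (bigD1 j) //= mxE eqxx mulr1n big1 ?addr0 //.
by move=> l /negPf; rewrite mxE => ->; rewrite mulr0n mulr0.
Qed.

Lemma omega_nz (V : finType) (z : {set V}) : z != set0 -> omega z = - (-1) ^+ #|z|.
Proof.
rewrite -card_gt0 /omega /sdim; case: #|z| => [|m] // _.
by rewrite subn1 /= exprS mulN1r opprK.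
Qed.

Lemma factor (V : finType) (G : {set {set V}}) : simplicial_complex G ->
  connection_matrix G =
  Bmx G *m diag_mx (\row_j omega (enum_val j)) *m (Bmx G)^T.
Proof.
move=> hG; apply/matrixP => i k; rewrite mulmx_diag_r !mxE.
under eq_bigr => j _ do rewrite !mxE.
set x := enum_val i; set y := enum_val k.
have xG : x \in G by apply: enum_valP.
rewrite -(big_enum_val (fun z : {set V} => (if z \subset x then 1 else 0) * omega z *
                                  (if z \subset y then 1 else 0))) /=.
rewrite big_mkcond /=.
have -> : \sum_(z : {set V}) (if z \in G then (if z \subset x then 1 else 0) * omega z *
                                  (if z \subset y then 1 else 0) else 0)
   = \sum_(z : {set V} | z \subset x :&: y) (if z != set0 then omega z else 0).
  rewrite [RHS]big_mkcond; apply: eq_bigr => z _ /=.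
  rewrite subsetI; case zx: (z \subset x); case zy: (z \subset y);
    rewrite /= ?mul0r ?mulr0 ?mul1r ?mulr1 ?if_same //.
  case: (boolP (z \in G)) => zG; first by rewrite (hG.1 z zG).
  case: (boolP (z != set0)) => // zn0.
  by move: zG; rewrite (hG.2 x z xG) ?zx.
rewrite (bigD1 set0) ?sub0set //= eqxx add0r.
under eq_bigr => z /andP [_ zn0] do rewrite zn0 (omega_nz zn0).
rewrite sumrN.
have := alt_sum (x :&: y); rewrite (bigD1 set0) ?sub0set //= cards0 expr0.
set t := \sum_(_ | _) _.
case: (x :&: y == set0) => /= E; lia.
Qed.

Theorem theorem1 (V : finType) (G : {set {set V}}) :
  simplicial_complex G ->
  \det (connection_matrix G) = fermi G.
Proof.
move=> hG; rewrite (factor hG) !det_mulmx det_tr det_Bmx det_diag mul1r mulr1.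
rewrite /fermi [RHS]big_enum_val; apply: eq_bigr => i _; by rewrite mxE.
Qed.
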